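(* Let $(X,d,\preceq)$ be an ordered metric space such that $(X,d)$ is complete, and let $f,g:X\to X$ satisfy: (i) $f(X)\subseteq g(X)$; (ii) $f$ is $g$-comparable; (iii) $(f,g)$ is compatible; (iv) $g$ is continuous; (v) either $f$ is continuous or $(X,d,\preceq)$ has the $g$-TCC property; (vi) there exists $x_0\in X$ with $g(x_0)\prec\succ f(x_0)$; (vii) there exists $\alpha\in[0,1)$ with $d(fx,fy)\le\alpha\, d(gx,gy)$ for all $x,y\in X$ with $g(x)\prec\succ g(y)$; $(u_0)$ for each $x,y\in X$, $C(fx,fy,\prec\succ,g(X))$ is nonempty. Then $f$ and $g$ have a unique common fixed point.
   Context: An ordered metric space $(X,d,\preceq)$ is a nonempty set $X$ with a metric $d$ and a partial order $\preceq$. For $x,y\in X$, write $x\prec\succ y$ if $x\preceq y$ or $y\preceq x$. $f$ is $g$-comparable if $g(x)\prec\succ g(y)$ implies $f(x)\prec\succ f(y)$. $(f,g)$ is compatible if $\lim_n d(gfx_n,fgx_n)=0$ whenever $\{g(x_n)\}$ and $\{f(x_n)\}$ converge to the same point of $X$. A sequence $\{x_n\}$ is termwise monotone if $x_n\prec\succ x_{n+1}$ for all $n\ge0$. $(X,d,\preceq)$ has the $g$-TCC property if for every termwise monotone sequence $\{x_n\}$ in $X$ converging to $x\in X$ there is a subsequence with $g(x_{n_k})\prec\succ g(x)$ for all $k$. For $E\subseteq X$ and $a,b\in E$, $C(a,b,\prec\succ,E)$ is the class of finite families $e_1,\dots,e_k\in E$ with $k\ge2$, $e_1=a$, $e_k=b$,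 and $e_i\prec\succ e_{i+1}$ for $1\le i\le k-1$. A common fixed point is $x\in X$ with $x=g(x)=f(x)$. *)

(* Defs.v *)
From Stdlib Require Import Reals.
Open Scope R_scope.

Definition is_metric {X : Type} (d : X -> X -> R) : Prop :=
  (forall x y, 0 <= d x y) /\
  (forall x y, d x y = 0 <-> x = y) /\
  (forall x y, d x y = d y x) /\
  (forall x y z, d x z <= d x y + d y z).

Definition is_partial_order {X : Type} (le : X -> X -> Prop) : Prop :=
  (forall x, le x x) /\
  (forall x y, le x y -> le y x -> x = y) /\
  (forall x y z, le x y -> le y z -> le x z).

Definition comparable {X : Type} (le : X -> X -> Prop) (x y : X) : Prop :=
  le x y \/ le y x.

Definition converges_to {X : Type} (d : X -> X -> R) (u : nat -> X) (l : X) : Prop :=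
  forall eps, eps > 0 -> exists N, forall n, (n >= N)%nat -> d (u n) l < eps.

Definition cauchy {X : Type} (d : X -> X -> R) (u : nat -> X) : Prop :=
  forall eps, eps > 0 -> exists N, forall m n, (m >= N)%nat -> (n >= N)%nat ->
    d (u m) (u n) < eps.

Definition complete {X : Type} (d : X -> X -> R) : Prop :=
  forall u, cauchy d u -> exists l, converges_to d u l.

Definition continuous_map {X : Type} (d : X -> X -> R) (h : X -> X) : Prop :=
  forall x eps, eps > 0 -> exists delta, delta > 0 /\
    forall y, d x y < delta -> d (h x) (h y) < eps.

Definition g_comparable {X : Type} (le : X -> X -> Prop) (f g : X -> X) : Prop :=
  forall x y, comparable le (g x) (g y) -> comparable le (f x) (f y).

Definition compatible {X : Type} (d : X -> X -> R) (f g : X -> X) : Prop :=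
  forall (u : nat -> X) (z : X),
    converges_to d (fun n => g (u n)) z ->
    converges_to d (fun n => f (u n)) z ->
    Un_cv (fun n => d (g (f (u n))) (f (g (u n)))) 0.

Definition termwise_monotone {X : Type} (le : X -> X -> Prop) (u : nat -> X) : Prop :=
  forall n, comparable le (u n) (u (S n)).

Definition g_TCC {X : Type} (d : X -> X -> R) (le : X -> X -> Prop) (g : X -> X) : Prop :=
  forall (u : nat -> X) (x : X), termwise_monotone le u -> converges_to d u x ->
    exists (phi : nat -> nat), (forall k, Nat.lt (phi k) (phi (S k))) /\
      forall k, comparable le (g (u (phi k))) (g x).

(* C(a,b,≺≻,E) nonempty: a finite family e_1..e_k (k>=2) in E, e_1=a, e_k=b,
   consecutive terms comparable. Encoded as a function e on indices 1..k. *)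
Definition chain_class_nonempty {X : Type} (le : X -> X -> Prop) (a b : X)
    (E : X -> Prop) : Prop :=
  exists (k : nat) (e : nat -> X), (k >= 2)%nat /\
    (forall i, (1 <= i <= k)%nat -> E (e i)) /\
    e 1%nat = a /\ e k = b /\
    (forall i, (1 <= i <= k - 1)%nat -> comparable le (e i) (e (S i))).

Definition image {X : Type} (g : X -> X) : X -> Prop := fun y => exists x, y = g x.

(* Main.v *)
Require Import Defs.
From Stdlib Require Import Reals.
From Stdlib Require Import Lra Lia ClassicalEpsilon.
Open Scope R_scope.

Section Aux.
Variables (X : Type) (d : X -> X -> R).
Hypothesis Hd : is_metric d.

Lemma d_pos x y : 0 <= d x y. Proof. destruct Hd as [H _]; apply H. Qed.
Lemma d_eq x y : d x y = 0 -> x = y. Proof. destruct Hd as [_ [H _]]; apply H. Qed.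
Lemma d_refl x : d x x = 0. Proof. destruct Hd as [_ [H _]]; apply H; reflexivity. Qed.
Lemma d_sym x y : d x y = d y x. Proof. destruct Hd as [_ [_ [H _]]]; apply H. Qed.
Lemma d_tri x y z : d x z <= d x y + d y z. Proof. destruct Hd as [_ [_ [_ H]]]; apply H. Qed.

Lemma small_zero a : 0 <= a -> (forall eps, eps > 0 -> a < eps) -> a = 0.
Proof. intros H0 H. destruct (Req_dec a 0) as [E|E]; auto.
  assert (Hp : a/2 > 0) by lra. specialize (H _ Hp). lra. Qed.

Lemma lim_unique u l l' : converges_to d u l -> converges_to d u l' -> l = l'.
Proof.
  intros H1 H2. apply d_eq. apply small_zero; [apply d_pos|].
  intros eps Heps. destruct (H1 (eps/2)) as [N1 HN1]; [lra|].
  destruct (H2 (eps/2)) as [N2 HN2]; [lra|].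
  specialize (HN1 (max N1 N2) ltac:(lia)). specialize (HN2 (max N1 N2) ltac:(lia)).
  pose proof (d_tri l (u (max N1 N2)) l'). pose proof (d_sym (u (max N1 N2)) l). lra.
Qed.

Lemma cont_conv h u z : continuous_map d h -> converges_to d u z ->
  converges_to d (fun n => h (u n)) (h z).
Proof. intros Hh Hu eps Heps. destruct (Hh z eps Heps) as [del [Hdel Hd']].
 destruct (Hu del Hdel) as [N HN]. exists N. intros n Hn. rewrite d_sym. apply Hd'.
 rewrite d_sym. auto. Qed.

Lemma conv_shift u l : converges_to d u l -> converges_to d (fun n => u (S n)) l.
Proof. intros H eps Heps. destruct (H eps Heps) as [N HN]. exists N. intros n Hn.
  apply HN; lia. Qed.

Lemma conv_sub u l (phi : nat -> nat) : (forall k, Nat.lt (phi k) (phi (S k))) ->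
  converges_to d u l -> converges_to d (fun k => u (phi k)) l.
Proof. intros Hphi H eps Heps. destruct (H eps Heps) as [N HN]. exists N. intros n Hn.
  apply HN. assert (forall k, (k <= phi k)%nat).
  { induction k. lia. specialize (Hphi k). unfold Nat.lt in Hphi. lia. }
  specialize (H0 n). lia. Qed.

Lemma conv_close v w l : converges_to d v l -> Un_cv (fun n => d (v n) (w n)) 0 ->
  converges_to d w l.
Proof. intros Hv Hvw eps Heps.
  destruct (Hv (eps/2)) as [N1 HN1]; [lra|].
  destruct (Hvw (eps/2)) as [N2 HN2]; [lra|].
  exists (max N1 N2). intros n Hn. specialize (HN1 n ltac:(lia)). specialize (HN2 n ltac:(lia)).
  unfold R_dist in HN2. rewrite Rminus_0_r, Rabs_pos_eq in HN2 by apply d_pos.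
  pose proof (d_tri (w n) (v n) l). pose proof (d_sym (w n) (v n)). lra. Qed.

Lemma pow_bound_zero al a C : 0 <= al < 1 -> 0 <= a -> (forall n, a <= al^n * C) -> a = 0.
Proof.
 intros Hal Ha H. destruct (Rle_dec C 0).
 - specialize (H 0%nat). simpl in H. lra.
 - destruct (Req_dec a 0) as [E|E]; auto. exfalso.
   assert (Hy: 0 < a / C) by (apply Rdiv_lt_0_compat; lra).
   destruct (pow_lt_1_zero al ltac:(rewrite Rabs_pos_eq; lra) _ Hy) as [N HN].
   specialize (HN N (le_n _)). rewrite Rabs_pos_eq in HN by (apply pow_le; lra).
   specialize (H N).
   assert (al^N * C < a). { apply (Rmult_lt_compat_r C) in HN; [|lra]. unfold Rdiv in HN.
     rewrite Rmult_assoc, Rinv_l, Rmult_1_r in HN; lra. }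
   lra.
Qed.

Lemma geom_cauchy al (a : nat -> X) : 0 <= al < 1 ->
  (forall n, d (a (S n)) (a (S (S n))) <= al * d (a n) (a (S n))) -> cauchy d a.
Proof.
  intros Hal Hs. set (D := d (a 0%nat) (a 1%nat)).
  assert (HD : 0 <= D) by apply d_pos.
  assert (Hb : forall n, d (a n) (a (S n)) <= al^n * D).
  { induction n; simpl. unfold D; lra.
    eapply Rle_trans; [apply Hs|]. rewrite Rmult_assoc. apply Rmult_le_compat_l; lra. }
  assert (Hk : forall m k, (1 - al) * d (a m) (a (m+k)%nat) <= (al^m - al^(m+k)) * D).
  { intros m k. induction k.
    - rewrite Nat.add_0_r, d_refl. replace ((al^m - al^m)*D) with 0 by ring. lra.
    - rewrite Nat.add_succ_r. pose proof (d_tri (a m) (a (m+k)%nat) (a (S (m+k)))).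
      pose proof (Hb (m+k)%nat). simpl. set (P := al^(m+k)) in *.
      assert (H1 : (1-al)*d (a m) (a (S (m+k))) <= (1-al)*(d (a m) (a (m + k)%nat) + d (a (m + k)%nat) (a (S (m + k))))) by (apply Rmult_le_compat_l; lra).
      assert (H2 : (1-al)*d (a (m + k)%nat) (a (S (m + k))) <= (1-al)*(P*D)) by (apply Rmult_le_compat_l; lra).
      nra. }
  intros eps Heps.
  assert (Hy : 0 < eps*(1-al)/(D+1)).
  { apply Rdiv_lt_0_compat; [apply Rmult_lt_0_compat|]; lra. }
  destruct (pow_lt_1_zero al ltac:(rewrite Rabs_pos_eq; lra) _ Hy) as [N HN].
  assert (Hmain : forall m n, (N <= m)%nat -> (m <= n)%nat -> d (a m) (a n) < eps).
  { intros m n Hm Hmn. specialize (Hk m (n - m)%nat). replace (m + (n-m))%nat with n in Hk by lia.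
    specialize (HN m Hm). rewrite Rabs_pos_eq in HN by (apply pow_le; lra).
    assert (0 <= al^n) by (apply pow_le; lra).
    assert (al^m * D <= eps*(1-al)/(D+1) * D) by (apply Rmult_le_compat_r; lra).
    assert (eps*(1-al)/(D+1) * (D+1) = eps*(1-al)) by (field; lra).
    assert ((1-al) * d (a m) (a n) < (1-al) * eps) by nra.
    apply Rmult_lt_reg_l in H2; lra. }
  exists N. intros m n Hm Hn. destruct (Nat.le_gt_cases m n).
  - apply Hmain; lia.
  - rewrite d_sym. apply Hmain; lia.
Qed.

Variables (le : X -> X -> Prop) (f g : X -> X).
Hypothesis Hle : is_partial_order le.
Hypothesis Hii : g_comparable le f g.
Variable al : R.
Hypothesis Hal : 0 <= al < 1.
Hypothesis Hc : forall x y, comparable le (g x) (g y) -> d (f x) (f y) <= al * d (g x) (g y).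

Lemma comp_refl x : comparable le x x.
Proof. left. destruct Hle as [H _]. apply H. Qed.

Lemma picard_comp (s t : nat -> X) : (forall n, g (s (S n)) = f (s n)) ->
  (forall n, g (t (S n)) = f (t n)) ->
  comparable le (g (s 0%nat)) (g (t 0%nat)) ->
  forall n, comparable le (g (s n)) (g (t n)) /\
     d (g (s n)) (g (t n)) <= al^n * d (g (s 0%nat)) (g (t 0%nat)).
Proof. intros Hs Ht H0. induction n. simpl; split; auto; lra.
 destruct IHn as [Hcn Hdn]. rewrite Hs, Ht. split. apply Hii; auto.
 eapply Rle_trans. apply Hc; auto. simpl. rewrite Rmult_assoc.
 apply Rmult_le_compat_l; lra. Qed.

Variable h : X -> X.
Hypothesis Hh : forall x, f x = g (h x).

Lemma coinc_unique u v : g u = f u -> g v = f v ->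
  chain_class_nonempty le (f u) (f v) (image g) -> g u = g v.
Proof.
  intros Hu Hv [k [e [Hk [HE [He1 [Hek Hcomp]]]]]].
  set (yy := fun i => epsilon (inhabits u) (fun x => e i = g x)).
  assert (Hyy : forall i, (1 <= i <= k)%nat -> e i = g (yy i)).
  { intros i Hi. apply (epsilon_spec (inhabits u) (fun x => e i = g x)). apply HE; auto. }
  set (sq := fun i n => Nat.iter n h (yy i)).
  assert (Hsq : forall i n, g (sq i (S n)) = f (sq i n)).
  { intros i n. unfold sq. simpl. rewrite Hh. reflexivity. }
  assert (Hcu : forall n, g ((fun _ : nat => u) (S n)) = f ((fun _ : nat => u) n)) by auto.
  assert (Hcv : forall n, g ((fun _ : nat => v) (S n)) = f ((fun _ : nat => v) n)) by auto.
  assert (Hcl : forall j, (1 <= j <= k)%nat -> exists C, forall n,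
            d (g u) (g (sq j n)) <= al^n * C).
  { induction j; intros Hj. lia.
    destruct (Nat.eq_dec j 0) as [E|E].
    - subst j. exists (d (g u) (g (yy 1%nat))). intros n.
      assert (Hc0 : comparable le (g ((fun _ : nat => u) 0%nat)) (g (sq 1%nat 0%nat))).
      { simpl. rewrite <- Hyy by lia. rewrite He1, <- Hu. apply comp_refl. }
      destruct (picard_comp _ _ Hcu (Hsq 1%nat) Hc0 n) as [_ H]. exact H.
    - destruct IHj as [C HC]; [lia|].
      exists (C + d (g (yy j)) (g (yy (S j)))). intros n.
      assert (Hc0 : comparable le (g (sq j 0%nat)) (g (sq (S j) 0%nat))).
      { simpl. rewrite <- !Hyy by lia. apply Hcomp. lia. }
      destruct (picard_comp _ _ (Hsq j) (Hsq (S j)) Hc0 n) as [_ H].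
      pose proof (d_tri (g u) (g (sq j n)) (g (sq (S j) n))).
      specialize (HC n). simpl in H. rewrite Rmult_plus_distr_l. lra. }
  destruct (Hcl k ltac:(lia)) as [C HC].
  assert (Hc0 : comparable le (g (sq k 0%nat)) (g ((fun _ : nat => v) 0%nat))).
  { simpl. rewrite <- Hyy by lia. rewrite Hek, <- Hv. apply comp_refl. }
  apply d_eq. apply (pow_bound_zero al _ (C + d (g (sq k 0%nat)) (g v))); auto. apply d_pos.
  intros n. destruct (picard_comp _ _ (Hsq k) Hcv Hc0 n) as [_ H].
  pose proof (d_tri (g u) (g (sq k n)) (g v)). specialize (HC n).
  rewrite Rmult_plus_distr_l. lra.
Qed.

End Aux.

Theorem theorem4p6 (X : Type) (d : X -> X -> R) (le : X -> X -> Prop) (f g : X -> X)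
  (Hd : is_metric d) (Hle : is_partial_order le) (Hne : inhabited X)
  (Hcomplete : complete d)
  (Hi : forall x, exists y, f x = g y)
  (Hii : g_comparable le f g)
  (Hiii : compatible d f g)
  (Hiv : continuous_map d g)
  (Hv : continuous_map d f \/ g_TCC d le g)
  (Hvi : exists x0, comparable le (g x0) (f x0))
  (Hvii : exists alpha, 0 <= alpha < 1 /\
     forall x y, comparable le (g x) (g y) -> d (f x) (f y) <= alpha * d (g x) (g y))
  (Hu0 : forall x y, chain_class_nonempty le (f x) (f y) (image g)) :
  exists z, (z = g z /\ z = f z) /\ forall w, w = g w /\ w = f w -> w = z.
Proof.
  destruct Hvii as [al [Hal Hc]].
  set (h := fun x => epsilon Hne (fun y => f x = g y)).
  assert (Hh : forall x, f x = g (h x)).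
  { intros x. apply (epsilon_spec Hne (fun y => f x = g y)). apply Hi. }
  destruct Hvi as [x0 Hx0].
  set (xs := fun n => Nat.iter n h x0).
  assert (Hxs : forall n, g (xs (S n)) = f (xs n)).
  { intros n. unfold xs. simpl. rewrite Hh. reflexivity. }
  assert (Hxs' : forall n, g ((fun n => xs (S n)) (S n)) = f ((fun n => xs (S n)) n)).
  { intros n. apply Hxs. }
  assert (Hcomp : forall n, comparable le (g (xs n)) (g (xs (S n)))).
  { intros n. assert (H0 : comparable le (g (xs 0%nat)) (g ((fun n => xs (S n)) 0%nat))).
    { change (comparable le (g x0) (g (xs 1%nat))). rewrite Hxs. exact Hx0. }
    destruct (picard_comp X d le f g Hii al Hal Hc _ _ Hxs Hxs' H0 n) as [H _]. exact H. }
  set (a := fun n => g (xs n)).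
  assert (Hca : cauchy d a).
  { apply (geom_cauchy X d Hd al); auto. intros n. unfold a. pose proof (Hc _ _ (Hcomp n)) as H.
    rewrite <- !Hxs in H. exact H. }
  destruct (Hcomplete a Hca) as [z Hz].
  assert (Hfz : converges_to d (fun n => f (xs n)) z).
  { intros eps Heps. destruct (conv_shift X d a z Hz eps Heps) as [N HN]. exists N.
    intros n Hn. specialize (HN n Hn). unfold a in HN. rewrite Hxs in HN. exact HN. }
  pose proof (Hiii xs z Hz Hfz) as Hcompat.
  assert (Hgf : converges_to d (fun n => g (f (xs n))) (g z)) by
    (apply (cont_conv X d Hd); auto).
  assert (Hfg : converges_to d (fun n => f (g (xs n))) (g z)) by
    (apply (conv_close X d Hd _ _ _ Hgf Hcompat)).
  assert (Hcoinc : g z = f z).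
  { destruct Hv as [Hfc | Htcc].
    - apply (lim_unique X d Hd (fun n => f (g (xs n)))); auto.
      apply (cont_conv X d Hd f a z); auto.
    - destruct (Htcc a z Hcomp Hz) as [phi [Hphi Hphc]].
      pose proof (conv_sub X d _ _ phi Hphi Hfg) as H1.
      apply (lim_unique X d Hd _ _ _ H1).
      pose proof (conv_sub X d _ _ phi Hphi (cont_conv X d Hd g a z Hiv Hz)) as H2.
      intros eps Heps. destruct (H2 eps Heps) as [N HN]. exists N. intros n Hn.
      specialize (HN n Hn). simpl in HN |- *.
      specialize (Hc (g (xs (phi n))) z (Hphc n)).
      pose proof (d_pos X d Hd (g (g (xs (phi n)))) (g z)). unfold a in *. nra. }
  set (w := g z).
  assert (Hw : g w = f w).
  { assert (Hconst : converges_to d (fun _ : nat => g z) w).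
    { intros eps Heps. exists 0%nat. intros. rewrite (d_refl X d Hd). lra. }
    assert (Hconst' : converges_to d (fun _ : nat => f z) w).
    { intros eps Heps. exists 0%nat. intros. unfold w. rewrite Hcoinc, (d_refl X d Hd). lra. }
    pose proof (Hiii (fun _ => z) w Hconst Hconst') as HU.
    apply (d_eq X d Hd). simpl in HU. apply (small_zero); [apply (d_pos X d Hd)|].
    intros eps Heps. destruct (HU eps Heps) as [N HN]. specialize (HN N (le_n _)).
    unfold R_dist in HN. rewrite Rminus_0_r, Rabs_pos_eq in HN by apply (d_pos X d Hd).
    unfold w. rewrite Hcoinc in HN |- *. exact HN. }
  assert (Hwz : g w = g z).
  { apply (coinc_unique X d Hd le f g Hle Hii al Hal Hc h Hh); auto. }
  exists w. split.
  - split. { unfold w at 1. rewrite <- Hwz. reflexivity. } { rewrite <- Hw. unfold w at 1. rewrite <- Hwz. reflexivity. }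
  - intros w' [Hw1 Hw2].
    assert (g w' = g z).
    { apply (coinc_unique X d Hd le f g Hle Hii al Hal Hc h Hh); auto. congruence. }
    unfold w. congruence.
Qed.
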